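(* If $Q\in\mathcal{A}^{(0)}$, then $Q=c\,\mathcal{D}+\mathcal{L}$ for some $c\in\mathbb{R}$, where $\mathcal{D}=w\,\partial/\partial w+\sum_{j=1}^n\delta_jz_j\,\partial/\partial z_j$ and $\mathcal{L}=\sum_{j=1}^n \ell_j(z_1,\dots,z_n)\partial/\partial z_j$ is a vector field independent of $w$ with no $\partial/\partial w$ component.
   Context: Coordinates $(w,z)=(z_0,z_1,\dots,z_n)\in\mathbb{C}\times\mathbb{C}^n$, $w=u+iv$. Weights: $\delta_0=1$ for $w$, $\delta_j=1/(2m_j)$ ($m_j$ positive integers) for $z_j$; $\mathrm{wt}(z^J)=\sum_k j_k\delta_k$, $\mathrm{wt}(z^J\bar z^K)=\mathrm{wt}\,J+\mathrm{wt}\,K$. A holomorphic polynomial vector field $Q=\sum_{k=0}^n q_k\partial/\partial z_k$ is homogeneous of weight $\mu$ if each $q_k$ is zero or homogeneous of weight $\mu-\delta_k$. Standing assumptions: $p(z,\bar z)=\sum c_{A,B}z^A\bar z^B$ is a real polynomial on $\mathbb{C}^n$, homogeneous of weight 1, with no purely holomorphic or purely antiholomorphic monomials. $\Omega_{hom}=\{v+p(z,\bar z)<0\}$, and $\mathcal{A}^{(\mu)}$ is the set of holomorphic vector fields $Q=q_0\partial/\partial w+\sum_{j=1}^nq_j\partial/\partial z_j$ homogeneous of weight $\mu$ with $\mathrm{Re}\big(-\tfrac{i}{2}q_0+\sum_j q_j\partial p/\partial z_j\big)=0$ on $\partial\Omega_{hom}$. *)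

(* Defs.v *)
From HB Require Import structures.
From mathcomp Require Import all_boot all_order all_algebra.
From mathcomp Require Import reals.
From mathcomp.real_closed Require Import complex.
From mathcomp.multinomials Require Import mpoly.

Set Implicit Arguments.
Unset Strict Implicit.
Unset Printing Implicit Defensive.

Import Order.TTheory GRing.Theory Num.Theory.
Local Open Scope ring_scope.

(* Coordinates (w, z_1, ..., z_n) are indexed by 'I_n.+1:
   index ord0 is w = z_0, index (lift ord0 j) is z_{j+1}, for j : 'I_n.
   The exponents m_j are given by mexp : 'I_n -> nat (assumed positive). *)

Definition delta (n : nat) (mexp : 'I_n -> nat) (k : 'I_n.+1) : rat :=
  match unlift ord0 k with
  | None => 1
  | Some j => ((2 * mexp j)%N%:R)^-1
  end.

Definition wtm (n : nat) (mexp : 'I_n -> nat) (a : 'X_{1..n.+1}) : rat :=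
  \sum_(k < n.+1) (a k)%:R * delta mexp k.

Definition whomog (R : realType) (n : nat) (mexp : 'I_n -> nat) (mu : rat)
  (q : {mpoly R[i][n.+1]}) : Prop :=
  forall a, a \in msupp q -> wtm mexp a = mu.

(* The polynomial p(z, zbar) is represented as a polynomial in 2n variables:
   index (lshift n j) is z_j, index (rshift n j) is zbar_j. *)
Definition wtm2 (n : nat) (mexp : 'I_n -> nat) (a : 'X_{1..n + n}) : rat :=
  \sum_(j < n) ((a (lshift n j))%:R + (a (rshift n j))%:R)
                  * ((2 * mexp j)%N%:R)^-1.

Definition zzbar (R : realType) (n : nat) (z : 'I_n -> R[i]) : 'I_(n + n) -> R[i] :=
  fun k => match split k with inl j => z j | inr j => ((z j)^*)%C end.

Definition zpart (R : realType) (n : nat) (x : 'I_n.+1 -> R[i]) : 'I_n -> R[i] :=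
  fun j => x (lift ord0 j).

(* Standing assumptions on p: real-valued, homogeneous of weight 1,
   no purely holomorphic or purely antiholomorphic monomials. *)
Definition admissible_p (R : realType) (n : nat) (mexp : 'I_n -> nat)
  (p : {mpoly R[i][n + n]}) : Prop :=
  [/\ (forall z : 'I_n -> R[i], complex.Im (p.@[zzbar z]) = 0),
      (forall a, a \in msupp p -> wtm2 mexp a = 1) &
      (forall a, a \in msupp p ->
         (exists j : 'I_n, (0 < a (lshift n j))%N) /\
         (exists j : 'I_n, (0 < a (rshift n j))%N))].

(* boundary of Omega_hom = {v + p(z, zbar) < 0}: the hypersurface v + p = 0 *)
Definition bdry_Omega (R : realType) (n : nat) (p : {mpoly R[i][n + n]})
  (x : 'I_n.+1 -> R[i]) : Prop :=
  (real_complex R (complex.Im (x ord0))) + p.@[zzbar (zpart x)] = 0.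

(* The set A^(mu): holomorphic polynomial vector fields
   Q = q_0 d/dw + sum_j q_j d/dz_j, homogeneous of weight mu
   (q_k zero or homogeneous of weight mu + delta_k), with
   Re(-i/2 q_0 + sum_j q_j dp/dz_j) = 0 on the boundary of Omega_hom. *)
Definition in_A (R : realType) (n : nat) (mexp : 'I_n -> nat)
  (p : {mpoly R[i][n + n]}) (mu : rat) (q : 'I_n.+1 -> {mpoly R[i][n.+1]}) : Prop :=
  (forall k, whomog mexp (mu + delta mexp k) (q k)) /\
  (forall x : 'I_n.+1 -> R[i], bdry_Omega p x ->
     complex.Re (- ('i%C / 2%:R) * (q ord0).@[x]
         + \sum_(j < n) (q (lift ord0 j)).@[x]
                         * (p^`M(lshift n j)).@[zzbar (zpart x)]) = 0).

(* Main.v *)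
Require Import Defs.
From HB Require Import structures.
From mathcomp Require Import all_boot all_order all_algebra.
From mathcomp Require Import reals.
From mathcomp.real_closed Require Import complex.
From mathcomp.multinomials Require Import mpoly.
From mathcomp Require Import zify ring.
Import Order.TTheory GRing.Theory Num.Theory.
Local Open Scope ring_scope.
Set Warnings "-notation-overridden,-ambiguous-paths,-notation-incompatible-prefix".
Set Implicit Arguments.
Unset Strict Implicit.
Unset Printing Implicit Defensive.

Lemma poly_inj_roots (F : idomainType) (P : {poly F}) (r : nat -> F) :
  injective r -> (forall k, P.[r k] = 0) -> P = 0.
Proof.
move=> ri hr; apply/eqP; apply: contraT => nz.
have := max_poly_roots nz (rs := mkseq r (size P)).
rewrite size_mkseq ltnn; apply.
  by apply/allP => x /mapP [k _ ->]; apply/rootP.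
by rewrite map_inj_uniq ?iota_uniq.
Qed.

Lemma natC_inj (R : realType) : injective (fun k : nat => (k%:R : R[i])).
Proof.
move=> k l /= h.
have : (complex.Re (k%:R : R[i])) = complex.Re (l%:R : R[i]) by rewrite h.
rewrite !raddfMn /= => /eqP; rewrite eqr_nat => /eqP //.
Qed.

Definition dpt (R : realType) (k : nat) : R[i] := (1 +i* k%:R)%C.
Arguments dpt : simpl never.
Definition upt (R : realType) (k : nat) : R[i] := ((dpt R k)^*)%C / dpt R k.

Lemma dpt_neq0 (R : realType) k : dpt R k != 0.
Proof.
apply/eqP => h; have := congr1 (@complex.Re R) h; rewrite /= => /eqP.
by rewrite oner_eq0.
Qed.

Lemma dptJ_neq0 (R : realType) k : ((dpt R k)^*)%C != 0.
Proof. by rewrite conjc_eq0 dpt_neq0. Qed.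

Lemma unitJ (R : realType) (x : R[i]) : x != 0 ->
  (x^*%C / x) * ((x^*%C / x)^*)%C = 1.
Proof.
move=> nz; rewrite rmorphM fmorphV /= conjcK.
by rewrite mulrA divfK // divff // conjc_eq0.
Qed.

Lemma upt_unit (R : realType) k : upt R k * ((upt R k)^*)%C = 1.
Proof. exact: unitJ (dpt_neq0 R k). Qed.

Lemma upt_inj (R : realType) : injective (upt R).
Proof.
move=> k l h.
have e k' : upt R k' + 1 = 2%:R / dpt R k'.
  rewrite /upt -[X in _ + X = _](divff (dpt_neq0 R k')) -mulrDl addrC addcJ.
  have -> : complex.Re (dpt R k') = 1 by rewrite /dpt.
  by rewrite rmorph1 mulr1.
have := congr1 (fun x => x + 1) h; rewrite /= !e => /(mulrI _).
rewrite unitfE pnatr_eq0 /= => /(_ isT) /invr_inj => /(congr1 (@complex.Im R)) /=.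
by move/eqP; rewrite eqr_nat => /eqP.
Qed.

Definition tval (R : realType) (z : R[i]) (t : R[i] * nat * nat) : R[i] :=
  z ^+ t.1.2 * (z^*)%C ^+ t.2 * t.1.1.

Lemma upow (R : realType) (z : R[i]) (b c : nat) : z * (z^*)%C = 1 -> (b <= c)%N ->
  z ^+ c * (z^*)%C ^+ b = z ^+ (c - b).
Proof.
move=> u le; rewrite -{1}(subnK le) exprD -mulrA -exprMn u expr1n mulr1 //.
Qed.

Lemma sep (R : realType) (N : nat) (A B : R[i]) (s : seq (R[i] * nat * nat)) :
  (0 < N)%N ->
  all (fun t => (t.1.2 < t.2 + N) && (t.2 < t.1.2 + N))%N s ->
  (forall z : R[i], z * (z^*)%C = 1 ->
     A * z ^+ N + B * (z^*)%C ^+ N + \sum_(t <- s) tval z t = 0) ->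
  A = 0.
Proof.
move=> N0 /allP hs h.
pose P : {poly R[i]} := A *: 'X^(N + N) + B%:P +
   \sum_(t <- s) t.1.1 *: 'X^(N + t.1.2 - t.2).
have PE z : z * (z^*)%C = 1 -> P.[z] = z ^+ N * (A * z ^+ N + B * (z^*)%C ^+ N + \sum_(t <- s) tval z t).
  move=> u; rewrite /P !hornerE horner_sum !mulrDr mulr_sumr; congr (_ + _ + _).
  - by rewrite exprD mulrCA.
  - by rewrite mulrCA upow // subnn expr0 mulr1.
  apply: eq_big_seq => t /hs /andP [h1 h2].
  rewrite hornerZ hornerXn /tval !mulrA -exprD upow // ?(mulrC t.1.1) //.
  by rewrite leq_eqVlt; apply/orP; right; rewrite addnC.
have P0 : P = 0.
  apply: (@poly_inj_roots _ P (upt R) (@upt_inj R)) => k.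
  by rewrite PE ?upt_unit // h ?upt_unit // mulr0.
have := congr1 (fun p : {poly R[i]} => p`_(N + N)) P0.
rewrite /P !coefD coefZ coefXn eqxx mulr1 coefC coef_sum coef0.
rewrite big_seq big1 ?addr0.
  have -> : ((N + N)%N == 0%N) = false by apply/negbTE/eqP; lia.
  by rewrite addr0.
move=> t /hs /andP [h1 h2]; rewrite coefZ coefXn.
have H : forall a b : nat, (a < b + N)%N -> (b < a + N)%N ->
  ((N + N)%N == (N + a - b)%N) = false by move=> a b ? ?; apply/negbTE/eqP; lia.
rewrite H //.
by rewrite mulr0.
Qed.

Lemma digits_inj (B k : nat) (a b : 'I_k -> nat) : (0 < B)%N ->
  (forall i, a i < B)%N -> (forall i, b i < B)%N ->
  (\sum_(i < k) a i * B ^ i = \sum_(i < k) b i * B ^ i)%N -> forall i, a i = b i.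
Proof.
move=> B0; elim: k a b => [|k IH] a b ha hb E i; first by case: i.
have S (c : 'I_k.+1 -> nat) : (\sum_(i < k.+1) c i * B ^ i =
    c ord0 + B * \sum_(i < k) c (lift ord0 i) * B ^ i)%N.
  rewrite big_ord_recl expn0 muln1 big_distrr /=; congr (_ + _)%N.
  by apply: eq_bigr => j _; rewrite /bump /= add1n expnS mulnCA.
move: E; rewrite !S => E.
have e0 : a ord0 = b ord0.
  have := congr1 (modn^~ B) E; rewrite /= !(mulnC B) !(addnC (_ ord0)) !modnMDl.
  by rewrite !modn_small.
move: E; rewrite e0 => /addnI /eqP; rewrite eqn_pmul2l // => /eqP E.
have IH' := IH (fun j => a (lift ord0 j)) (fun j => b (lift ord0 j)) (fun j => ha _) (fun j => hb _) E.
by case: (unliftP ord0 i) => [j ->|->].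
Qed.

Lemma mpoly_vanish (R : realType) k (g : {mpoly R[i][k]}) :
  (forall x, g.@[x] = 0) -> g = 0.
Proof.
move=> h.
pose B := (\sum_(m <- msupp g) mdeg m).+1.
have hB m i : m \in msupp g -> (m i < B)%N.
  move=> mg; rewrite ltnS (bigD1_seq m) ?msupp_uniq //=.
  apply: leq_trans (leq_addr _ _); rewrite mdegE (bigD1 i) //=.
  exact: leq_addr.
pose kap (m : 'X_{1..k}) := (\sum_(i < k) m i * B ^ i)%N.
pose P : {poly R[i]} := \sum_(m <- msupp g) g@_m *: 'X^(kap m).
have P0 : P = 0.
  apply: (poly_inj_roots (@natC_inj R)) => t.
  rewrite -(h (fun i => (t%:R : R[i]) ^+ (B ^ i))) mevalE /P horner_sum.
  apply: eq_bigr => m _; rewrite hornerZ hornerXn; congr (_ * _).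
  rewrite /kap -prodrXr; apply: eq_bigr => i _.
  by rewrite -exprM mulnC.
apply/mpolyP => m0; rewrite mcoeff0.
case: (boolP (m0 \in msupp g)) => [mg|]; last by rewrite mcoeff_msupp negbK => /eqP.
have := congr1 (fun p : {poly R[i]} => p`_(kap m0)) P0.
rewrite coef0 /P coef_sum (bigD1_seq m0) ?msupp_uniq //= coefZ coefXn eqxx mulr1.
rewrite big_seq_cond big1 ?addr0 // => m /andP [mg' ne].
rewrite coefZ coefXn; case: eqP; rewrite ?mulr0 // => E.
case/negP: ne; apply/eqP/mnmP => i.
by apply: (digits_inj _ (hB m^~ mg') (hB m0^~ mg)) => //; rewrite -E.
Qed.

Definition LT (R : realType) k (g : {mpoly R[i][k]}) (y : 'I_k -> R[i]) (al be : 'I_k -> nat) :=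
  [seq (g@_m * \prod_(i < k) y i ^+ m i, (\sum_(i < k) m i * al i)%N, (\sum_(i < k) m i * be i)%N)
  | m <- msupp g].

Lemma eval_rot (R : realType) k (g : {mpoly R[i][k]}) (y : 'I_k -> R[i]) (al be : 'I_k -> nat) (z : R[i]) :
  g.@[fun i => z ^+ al i * (z^*)%C ^+ be i * y i] = \sum_(t <- LT g y al be) tval z t.
Proof.
rewrite mevalE /LT [in RHS]big_map; apply: eq_bigr => m _; rewrite /tval /=.
rewrite (eq_bigr (fun i => z ^+ (m i * al i) * (z^*)%C ^+ (m i * be i) * y i ^+ m i)); last first.
  by move=> i _; rewrite !exprMn -!exprM !(mulnC (m i)).
rewrite !big_split /= !prodrXr.
by rewrite mulrCA.
Qed.

Lemma eval_rot_hom (R : realType) k (g : {mpoly R[i][k]}) (y : 'I_k -> R[i]) (al be : 'I_k -> nat) (z : R[i]) D E :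
  (forall m, m \in msupp g -> \sum_(i < k) m i * al i = D)%N ->
  (forall m, m \in msupp g -> \sum_(i < k) m i * be i = E)%N ->
  g.@[fun i => z ^+ al i * (z^*)%C ^+ be i * y i] = z ^+ D * (z^*)%C ^+ E * g.@[y].
Proof.
move=> hD hE; rewrite eval_rot /LT big_map mevalE mulr_sumr.
by apply: eq_big_seq => m mg; rewrite /tval /= hD // hE.
Qed.

Lemma eval_indep (R : realType) k (g : {mpoly R[i][k]}) (x x' : 'I_k -> R[i]) :
  (forall m, m \in msupp g -> forall i, m i != 0%N -> x i = x' i) -> g.@[x] = g.@[x'].
Proof.
move=> h; rewrite !mevalE; apply: eq_big_seq => m mg; congr (_ * _).
apply: eq_bigr => i _; case: (eqVneq (m i) 0%N) => [->|ne]; first by rewrite !expr0.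
by rewrite (h m mg i ne).
Qed.

Definition Nn n (mexp : 'I_n -> nat) := (\prod_(j < n) (2 * mexp j))%N.
Definition ee n (mexp : 'I_n -> nat) (j : 'I_n) := (\prod_(k < n | k != j) (2 * mexp k))%N.
Definition al1 n (mexp : 'I_n -> nat) (i : 'I_n.+1) : nat :=
  match unlift ord0 i with None => 0%N | Some j => ee mexp j end.
Definition alp n (mexp : 'I_n -> nat) (k : 'I_(n + n)) : nat :=
  match split k with inl j => ee mexp j | inr _ => 0%N end.
Definition bep n (mexp : 'I_n -> nat) (k : 'I_(n + n)) : nat :=
  match split k with inl _ => 0%N | inr j => ee mexp j end.

Lemma eeN n (mexp : 'I_n -> nat) j : (ee mexp j * (2 * mexp j))%N = Nn mexp.
Proof. by rewrite /Nn (bigD1 j) //= mulnC. Qed.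

Lemma ee_gt0 n (mexp : 'I_n -> nat) j : (forall j, 0 < mexp j)%N -> (0 < ee mexp j)%N.
Proof. by move=> hm; apply: prodn_cond_gt0 => k _; rewrite muln_gt0 hm. Qed.

Lemma Nn_gt0 n (mexp : 'I_n -> nat) : (forall j, 0 < mexp j)%N -> (0 < Nn mexp)%N.
Proof. by move=> hm; apply: prodn_gt0 => k; rewrite muln_gt0 hm. Qed.

Lemma eeQ n (mexp : 'I_n -> nat) j : (forall j, 0 < mexp j)%N ->
  ((ee mexp j)%:R : rat) = (Nn mexp)%:R * ((2 * mexp j)%N%:R)^-1.
Proof.
move=> hm; rewrite -(eeN mexp j) natrM mulfK // pnatr_eq0 -lt0n muln_gt0 hm //.
Qed.

Lemma wtm_split n (mexp : 'I_n -> nat) (m : 'X_{1..n.+1}) :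
  wtm mexp m = (m ord0)%:R + \sum_(j < n) (m (lift ord0 j))%:R * ((2 * mexp j)%N%:R)^-1.
Proof.
rewrite /wtm big_ord_recl /delta unlift_none mulr1; congr (_ + _).
by apply: eq_bigr => j _; rewrite liftK.
Qed.

Lemma sum_al1 n (mexp : 'I_n -> nat) (m : 'X_{1..n.+1}) : (forall j, 0 < mexp j)%N ->
  ((\sum_(i < n.+1) m i * al1 mexp i)%N%:R : rat) =
  (Nn mexp)%:R * \sum_(j < n) (m (lift ord0 j))%:R * ((2 * mexp j)%N%:R)^-1.
Proof.
move=> hm; rewrite big_ord_recl /al1 unlift_none muln0 add0n natr_sum mulr_sumr.
by apply: eq_bigr => j _; rewrite liftK natrM eeQ // mulrCA.
Qed.

Lemma sum_ge0' n (mexp : 'I_n -> nat) (m : 'X_{1..n.+1}) :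
  0 <= \sum_(j < n) ((m (lift ord0 j))%:R : rat) * ((2 * mexp j)%N%:R)^-1.
Proof. by apply: sumr_ge0 => j _; rewrite mulr_ge0 // invr_ge0. Qed.

Lemma qj_weights n (mexp : 'I_n -> nat) (R : realType) (g : {mpoly R[i][n.+1]}) j m :
  (forall j, 0 < mexp j)%N -> whomog mexp (0 + delta mexp (lift ord0 j)) g ->
  m \in msupp g -> m ord0 = 0%N /\ (\sum_(i < n.+1) m i * al1 mexp i)%N = ee mexp j.
Proof.
move=> hm hW mg; have w := hW m mg.
rewrite wtm_split add0r /delta liftK in w.
have s0 := sum_ge0' mexp m.
have m00 : m ord0 = 0%N.
  apply/eqP; apply: contraT; rewrite -lt0n => m0.
  have : ((2 * mexp j)%N%:R : rat)^-1 < 1.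
    by rewrite invf_lt1 ?ltr0n ?muln_gt0 ?hm // ltr1n; have := hm j; lia.
  rewrite -w ltNge => /negP H; exfalso; apply: H.
  by apply: le_trans (_ : 1 <= (m ord0)%:R) _; rewrite ?ler1n ?lerDl.
split => //; apply/eqP; rewrite -(eqr_nat rat) sum_al1 //.
by move: w; rewrite m00 add0r => ->; rewrite -eeQ.
Qed.


Lemma f_weights n (mexp : 'I_n -> nat) (R : realType) (g : {mpoly R[i][n.+1]}) m :
  (forall j, 0 < mexp j)%N -> whomog mexp (0 + delta mexp ord0) g ->
  m \in msupp (g - g@_U_(ord0) *: 'X_ord0) ->
  m ord0 = 0%N /\ (\sum_(i < n.+1) m i * al1 mexp i)%N = Nn mexp.
Proof.
move=> hm hW; rewrite mcoeff_msupp mcoeffB mcoeffZ mcoeffX.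
case: (eqVneq U_(ord0)%MM m) => [<-|neU]; first by rewrite mulr1 subrr eqxx.
rewrite mulr0 subr0 -mcoeff_msupp => mg; have w := hW m mg.
rewrite wtm_split add0r /delta unlift_none in w.
have s0 := sum_ge0' mexp m.
have m00 : m ord0 = 0%N.
  apply/eqP; apply: contraT; rewrite -lt0n => m0.
  have m1 : m ord0 = 1%N.
    have : ((m ord0)%:R : rat) <= 1 by rewrite -[X in _ <= X]w lerDl.
    by rewrite lern1; lia.
  move: w; rewrite m1 => w.
  have s00 : \sum_(j < n) ((m (lift ord0 j))%:R : rat) / (2 * mexp j)%N%:R = 0.
    by apply: (addrI (1:rat)); rewrite addr0 -[in RHS]w.
  case/eqP: neU; apply/mnmP => i; rewrite mnm1E.
  case: (unliftP ord0 i) => [j ->|->]; last by rewrite m1 eqxx.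
  have hj : ((m (lift ord0 j))%:R : rat) / (2 * mexp j)%N%:R = 0.
    by apply: (psumr_eq0P _ s00) => // k _; rewrite mulr_ge0 // invr_ge0.
  move/eqP: hj; rewrite mulf_eq0 invr_eq0 !pnatr_eq0 muln_eq0 /= (negbTE (lt0n_neq0 (hm j))) orbF.
  by move=> /eqP ->.
split => //; apply/eqP; rewrite -(eqr_nat rat) sum_al1 //.
by move: w; rewrite m00 add0r => ->; rewrite mulr1.
Qed.

Lemma split_l n (j : 'I_n) : split (lshift n j) = inl j.
Proof. exact: (@unsplitK n n (inl j)). Qed.
Lemma split_r n (j : 'I_n) : split (rshift n j) = inr j.
Proof. exact: (@unsplitK n n (inr j)). Qed.

Lemma sum_alp n (mexp : 'I_n -> nat) (m : 'X_{1..n+n}) :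
  (\sum_(k < n + n) m k * alp mexp k = \sum_(j < n) m (lshift n j) * ee mexp j)%N.
Proof.
rewrite big_split_ord /= [X in (_ + X)%N]big1 ?addn0.
  by apply: eq_bigr => j _; rewrite /alp split_l.
by move=> j _; rewrite /alp split_r muln0.
Qed.

Lemma sum_bep n (mexp : 'I_n -> nat) (m : 'X_{1..n+n}) :
  (\sum_(k < n + n) m k * bep mexp k = \sum_(j < n) m (rshift n j) * ee mexp j)%N.
Proof.
rewrite big_split_ord /= [X in (X + _)%N]big1 ?add0n.
  by apply: eq_bigr => j _; rewrite /bep split_r.
by move=> j _; rewrite /bep split_l muln0.
Qed.

Lemma p_weights n (mexp : 'I_n -> nat) (R : realType) (p : {mpoly R[i][n + n]}) m :
  (forall j, 0 < mexp j)%N -> admissible_p mexp p -> m \in msupp p ->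
  [/\ (\sum_(k < n + n) m k * alp mexp k + \sum_(k < n + n) m k * bep mexp k = Nn mexp)%N,
      (0 < \sum_(k < n + n) m k * alp mexp k)%N &
      (0 < \sum_(k < n + n) m k * bep mexp k)%N].
Proof.
move=> hm [_ hW hAB] mg; rewrite sum_alp sum_bep.
have [[jl hl] [jr hr]] := hAB m mg.
split.
- have E : (((\sum_(j < n) m (lshift n j) * ee mexp j) + \sum_(j < n) m (rshift n j) * ee mexp j)%N%:R : rat)
      = (Nn mexp)%:R * wtm2 mexp m.
    rewrite /wtm2 mulr_sumr -big_split natr_sum; apply: eq_bigr => j _ /=.
    by rewrite -mulnDl natrM natrD eeQ // mulrCA.
  by apply/eqP; rewrite -(eqr_nat rat) E (hW m mg) mulr1.
- rewrite (bigD1 jl) //=; apply: leq_trans (leq_addr _ _).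
  by rewrite muln_gt0 hl ee_gt0.
- rewrite (bigD1 jr) //=; apply: leq_trans (leq_addr _ _).
  by rewrite muln_gt0 hr ee_gt0.
Qed.

Lemma pj_mono n (R : realType) (p : {mpoly R[i][n]}) (i0 : 'I_n) m :
  m \in msupp (p^`M(i0)) -> (m + U_(i0))%MM \in msupp p.
Proof.
rewrite !mcoeff_msupp mcoeff_deriv; apply: contra => /eqP ->; by rewrite mul0rn.
Qed.

Lemma sum_addU k (m : 'X_{1..k}) (i0 : 'I_k) (al : 'I_k -> nat) :
  (\sum_(l < k) (m + U_(i0))%MM l * al l = \sum_(l < k) m l * al l + al i0)%N.
Proof.
rewrite (eq_bigr (fun l => m l * al l + (i0 == l) * al l)%N); last first.
  by move=> l _; rewrite mnmDE mnm1E mulnDl.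
rewrite big_split /=; congr (_ + _)%N.
rewrite (bigD1 i0) //= eqxx mul1n big1 ?addn0 // => l ne.
by rewrite eq_sym (negbTE ne).
Qed.

Definition sh (R : realType) (c : R[i]) (a : nat) (t : R[i] * nat * nat) : R[i] * nat * nat :=
  (c * t.1.1, (a + t.1.2)%N, t.2).
Definition cj (R : realType) (t : R[i] * nat * nat) : R[i] * nat * nat :=
  ((t.1.1)^*%C, t.2, t.1.2).

Lemma tval_sh (R : realType) (z c : R[i]) a t : tval z (sh c a t) = c * z ^+ a * tval z t.
Proof. by rewrite /tval /sh /= exprD; ring. Qed.

Lemma tval_cj (R : realType) (z : R[i]) t : tval z (cj t) = ((tval z t)^*)%C.
Proof. by rewrite /tval /cj /= !rmorphM !rmorphXn /= conjcK; ring. Qed.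

Lemma big_catn (R : realType) n (s : 'I_n -> seq (R[i] * nat * nat)) (F : R[i] * nat * nat -> R[i]) :
  \sum_(t <- \big[cat/[::]]_(j < n) s j) F t = \sum_(j < n) \sum_(t <- s j) F t.
Proof.
elim: n s => [|n IH] s; first by rewrite !big_ord0 big_nil.
by rewrite !big_ord_recl big_cat IH.
Qed.

Lemma all_catn (T : Type) n (s : 'I_n -> seq T) (P : pred T) :
  (forall j, all P (s j)) -> all P (\big[cat/[::]]_(j < n) s j).
Proof.
by move=> h; elim/big_rec: _ => [|j x _ IH] //; rewrite all_cat h IH.
Qed.

Lemma conjI (R : realType) : (('i%C : R[i])^*)%C = - 'i%C.
Proof. by apply/eqP; rewrite eq_complex /= oppr0 !eqxx. Qed.

Lemma bd_calc (R : realType) (u : R) (P : R[i]) : complex.Im P = 0 ->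
  real_complex R (complex.Im (u%:C - 'i * P))%C + P = 0.
Proof. by case: P => a b /= ->; apply/eqP; rewrite eq_complex /=; apply/andP; split; apply/eqP; ring. Qed.

Definition pt (R : realType) n (x0 : R[i]) (z : 'I_n -> R[i]) : 'I_n.+1 -> R[i] :=
  fun i => match unlift ord0 i with None => x0 | Some j => z j end.

Lemma pt0 (R : realType) n (x0 : R[i]) (z : 'I_n -> R[i]) : pt x0 z ord0 = x0.
Proof. by rewrite /pt unlift_none. Qed.

Lemma ptl (R : realType) n (x0 : R[i]) (z : 'I_n -> R[i]) j : pt x0 z (lift ord0 j) = z j.
Proof. by rewrite /pt liftK. Qed.

Lemma zz_zpart (R : realType) n (x0 : R[i]) (z : 'I_n -> R[i]) :
  zzbar (zpart (pt x0 z)) =1 zzbar z.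
Proof. by move=> k; rewrite /zzbar /zpart; case: (split k) => j; rewrite ptl. Qed.

Lemma bd (R : realType) n (mexp : 'I_n -> nat) (p : {mpoly R[i][n + n]}) (u : R) z :
  admissible_p mexp p -> bdry_Omega p (pt (u%:C - 'i * p.@[zzbar z])%C z).
Proof.
case=> hIm _ _; rewrite /bdry_Omega pt0 (meval_eq _ (zz_zpart _ z)).
exact: bd_calc.
Qed.

Lemma indep0 (R : realType) n (g : {mpoly R[i][n.+1]}) (x x' : 'I_n.+1 -> R[i]) :
  (forall m, m \in msupp g -> m ord0 = 0%N) ->
  (forall j, x (lift ord0 j) = x' (lift ord0 j)) -> g.@[x] = g.@[x'].
Proof.
move=> h0 h; apply: eval_indep => m mg i.
by case: (unliftP ord0 i) => [j ->|->] //; rewrite h0 // eqxx.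
Qed.

Lemma conjM (R : realType) (x y : R[i]) : ((x * y)^*)%C = (x^*)%C * (y^*)%C.
Proof. exact: rmorphM. Qed.
Lemma conjN (R : realType) (x : R[i]) : ((- x)^*)%C = - (x^*)%C.
Proof. exact: rmorphN. Qed.
Lemma conjD (R : realType) (x y : R[i]) : ((x + y)^*)%C = (x^*)%C + (y^*)%C.
Proof. exact: rmorphD. Qed.
Lemma conjV (R : realType) (x : R[i]) : ((x^-1)^*)%C = ((x^*)%C)^-1.
Proof. exact: fmorphV. Qed.
Lemma conjX (R : realType) (x : R[i]) k : ((x ^+ k)^*)%C = ((x^*)%C) ^+ k.
Proof. exact: rmorphXn. Qed.

Lemma half_i_real (R : realType) (c : R[i]) :
  - ('i%C / 2%:R) * c + ((- ('i%C / 2%:R) * c)^*)%C = 0 -> (c^*)%C = c.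
Proof.
rewrite conjM conjN conjM conjI conjV conjc_nat.
have -> : - ('i%C / 2%:R) * c + - (- 'i%C / 2%:R) * (c^*)%C = ('i%C / 2%:R) * ((c^*)%C - c) by ring.
move/eqP; rewrite mulf_eq0 mulf_eq0 invr_eq0 pnatr_eq0 orbF subr_eq0 => /orP [|/eqP //].
by rewrite eq_complex /= oner_eq0 andbF.
Qed.

Lemma conj_sum (R : realType) (s : seq (R[i] * nat * nat)) (F : R[i] * nat * nat -> R[i]) :
  ((\sum_(t <- s) F t)^*)%C = \sum_(t <- s) ((F t)^*)%C.
Proof. exact: rmorph_sum. Qed.

Lemma ring1 (R : realType) (I c0 S1 S2 F U : R[i]) :
  - I * (c0 * - ('i%C * S2) + U * F) + S1 = - I * F * U + (- I * c0 * - 'i%C * S2 + S1).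
Proof. ring. Qed.

Lemma ring2 (R : realType) (A B U V S1 S2 : R[i]) :
  A * U + S1 + (B * V + S2) = 0 -> A * U + B * V + (S1 + S2) = 0.
Proof. by move=> <-; ring. Qed.

Lemma realJ (R : realType) (x : R[i]) : (x^*)%C = x -> x = ((complex.Re x)%:C)%C.
Proof.
case: x => a b [] /eqP.
rewrite eq_sym -subr_eq0 opprK -mulr2n mulrn_eq0 /= => /eqP -> //.
Qed.

Unset Implicit Arguments.
Set Strict Implicit.

Theorem lemma3p1 (R : realType) (n : nat) (mexp : 'I_n -> nat)
  (p : {mpoly R[i][n + n]}) (q : 'I_n.+1 -> {mpoly R[i][n.+1]}) :
  (forall j, (0 < mexp j)%N) ->
  admissible_p mexp p ->
  in_A mexp p 0 q ->
  exists (c : R) (l : 'I_n -> {mpoly R[i][n.+1]}),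
    (forall j a, a \in msupp (l j) -> a ord0 = 0%N) /\
    q ord0 = c%:C%C *: 'X_ord0 /\
    (forall j : 'I_n,
       q (lift ord0 j) = (c%:C%C * ratr (delta mexp (lift ord0 j))) *: 'X_(lift ord0 j) + l j).
Proof.
move=> hm hadm [hW hB].
set c0 := (q ord0)@_U_(ord0).
set f := q ord0 - c0 *: 'X_ord0.
have qE : q ord0 = c0 *: 'X_ord0 + f by rewrite /f addrC subrK.
have hf m : m \in msupp f -> m ord0 = 0%N /\ (\sum_(i < n.+1) m i * al1 mexp i)%N = Nn mexp.
  exact: (f_weights hm (hW ord0)).
have hq j m : m \in msupp (q (lift ord0 j)) ->
    m ord0 = 0%N /\ (\sum_(i < n.+1) m i * al1 mexp i)%N = ee mexp j.
  exact: (qj_weights hm (hW (lift ord0 j))).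
pose E (x : 'I_n.+1 -> R[i]) := - ('i%C / 2%:R) * (q ord0).@[x]
         + \sum_(j < n) (q (lift ord0 j)).@[x]
                         * (p^`M(lshift n j)).@[zzbar (zpart x)].
have hRe x : bdry_Omega p x -> E x + ((E x)^*)%C = 0.
  by move=> /hB h; rewrite addcJ /E h rmorph0 mulr0.
have qev x : (q ord0).@[x] = c0 * x ord0 + f.@[x].
  by rewrite qE mevalD mevalZ mevalXU.
have c0J : ((c0)^*)%C = c0.
  pose z0 := fun _ : 'I_n => (0 : R[i]).
  pose P0 := p.@[zzbar z0].
  pose x0 := pt (0%:C - 'i * P0)%C z0.
  pose x1 := pt (1%:C - 'i * P0)%C z0.
  have h0 := hRe _ (bd 0 z0 hadm).
  have h1 := hRe _ (bd 1 z0 hadm).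
  have D : E x1 = E x0 + (- ('i%C / 2%:R)) * c0.
    rewrite /E !qev /x1 /x0 !pt0.
    have -> : f.@[x1] = f.@[x0] by apply: indep0 => [m /hf []//|j]; rewrite /x1 /x0 !ptl.
    have -> : \sum_(j < n) (q (lift ord0 j)).@[x1] * (p^`M(lshift n j)).@[zzbar (zpart x1)]
      = \sum_(j < n) (q (lift ord0 j)).@[x0] * (p^`M(lshift n j)).@[zzbar (zpart x0)].
      apply: eq_bigr => j _; congr (_ * _).
        by apply: indep0 => [m /hq []//|j']; rewrite /x1 /x0 !ptl.
      by rewrite (meval_eq _ (zz_zpart _ z0)) (meval_eq _ (zz_zpart _ z0)).
    rewrite rmorph1 rmorph0; ring.
  have w0 : (- ('i%C / 2%:R)) * c0 + ((- ('i%C / 2%:R)) * c0)^*%C = 0.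
    move: h1; rewrite D rmorphD /=.
    have -> : E x0 + - ('i%C / 2%:R) * c0 + ((E x0)^*%C + (- ('i%C / 2%:R) * c0)^*%C)
      = (E x0 + (E x0)^*%C) + (- ('i%C / 2%:R) * c0 + (- ('i%C / 2%:R) * c0)^*%C) by ring.
    by rewrite h0 add0r.
  exact: half_i_real.
  have f0pt : forall z : 'I_n -> R[i], f.@[pt 0 z] = 0.
    move=> z.
    pose rot (u : R[i]) := fun j : 'I_n => u ^+ ee mexp j * z j.
    pose xz (u : R[i]) := pt (0%:C - 'i * p.@[zzbar (rot u)])%C (rot u).
    have zzr u : zzbar (rot u) =1 (fun k => u ^+ alp mexp k * (u^*)%C ^+ bep mexp k * zzbar z k).
      move=> k; rewrite /zzbar /alp /bep /rot; case: (split k) => j.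
        by rewrite expr0 mulr1.
      by rewrite expr0 mul1r conjM conjX.
    have Pz u : p.@[zzbar (rot u)] = \sum_(t <- LT p (zzbar z) (alp mexp) (bep mexp)) tval u t.
      by rewrite (meval_eq _ (zzr u)) eval_rot.
    have Pjz u j : (p^`M(lshift n j)).@[zzbar (zpart (xz u))] =
        \sum_(t <- LT (p^`M(lshift n j)) (zzbar z) (alp mexp) (bep mexp)) tval u t.
      by rewrite (meval_eq _ (zz_zpart _ _)) (meval_eq _ (zzr u)) eval_rot.
    have rot1 u : forall j, xz u (lift ord0 j) =
        u ^+ al1 mexp (lift ord0 j) * (u^*)%C ^+ (fun _ => 0%N) (lift ord0 j) * pt 0 z (lift ord0 j).
      by move=> j; rewrite /xz /al1 !ptl liftK expr0 mulr1.
    have qjz u j : (q (lift ord0 j)).@[xz u] = u ^+ ee mexp j * (q (lift ord0 j)).@[pt 0 z].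
      rewrite (indep0 (x' := fun i => u ^+ al1 mexp i * (u^*)%C ^+ (fun _ => 0%N) i * pt 0 z i)) //.
        rewrite (eval_rot_hom _ _ (D := ee mexp j) (E := 0%N)) ?expr0 ?mulr1 //.
          by move=> m /hq [].
        by move=> m _; rewrite big1 // => i _; rewrite muln0.
      by move=> m /hq [].
    have fz u : f.@[xz u] = u ^+ Nn mexp * f.@[pt 0 z].
      rewrite (indep0 (x' := fun i => u ^+ al1 mexp i * (u^*)%C ^+ (fun _ => 0%N) i * pt 0 z i)) //.
        rewrite (eval_rot_hom _ _ (D := Nn mexp) (E := 0%N)) ?expr0 ?mulr1 //.
          by move=> m /hf [].
        by move=> m _; rewrite big1 // => i _; rewrite muln0.
      by move=> m /hf [].
    pose A := - ('i%C / 2%:R) * f.@[pt 0 z].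
    pose k0 := - ('i%C / 2%:R) * c0 * (- 'i%C).
    pose Lp := LT p (zzbar z) (alp mexp) (bep mexp).
    pose Lj j := LT (p^`M(lshift n j)) (zzbar z) (alp mexp) (bep mexp).
    pose L := map (sh k0 0) Lp ++
       \big[cat/[::]]_(j < n) map (sh ((q (lift ord0 j)).@[pt 0 z]) (ee mexp j)) (Lj j).
    have xz0 u : xz u ord0 = - ('i * p.@[zzbar (rot u)]) by rewrite /xz pt0 rmorph0 sub0r.
    have Ez u : E (xz u) = A * u ^+ Nn mexp + \sum_(t <- L) tval u t.
      rewrite /E qev xz0 fz Pz big_cat /= big_map big_catn.
      have -> : \sum_(j < n) (q (lift ord0 j)).@[xz u] * (p^`M(lshift n j)).@[zzbar (zpart (xz u))]
         = \sum_(j < n) \sum_(t <- map (sh ((q (lift ord0 j)).@[pt 0 z]) (ee mexp j)) (Lj j)) tval u t.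
        apply: eq_bigr => j _; rewrite qjz Pjz [in RHS]big_map mulr_sumr; apply: eq_bigr => t _.
        by rewrite tval_sh (mulrC (u ^+ _)).
      have -> : \sum_(t <- Lp) tval u (sh k0 0 t) = k0 * \sum_(t <- Lp) tval u t.
        by rewrite mulr_sumr; apply: eq_bigr => t _; rewrite tval_sh expr0 mulr1.
      rewrite /A /k0 /Lp; move: (\sum_(j < n) _) (\sum_(t <- LT _ _ _ _) _) (f.@[_]) => S1 S2 F.
      exact: ring1.
    have hsep : A = 0.
      apply: (@sep R (Nn mexp) A (A^*)%C (L ++ map (@cj R) L)).
      - exact: Nn_gt0.
      - have hL : all (fun t => (t.1.2 < t.2 + Nn mexp) && (t.2 < t.1.2 + Nn mexp))%N L.
          rewrite all_cat; apply/andP; split.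
            apply/allP => t /mapP [t' /mapP [m mg ->] ->] /=.
            have [h1 h2 h3] := p_weights hm hadm mg.
            move: h1 h2 h3.
            set a := (\sum_(k < n + n) m k * alp mexp k)%N.
            set b := (\sum_(k < n + n) m k * bep mexp k)%N.
            move=> h1 h2 h3; apply/andP; split; lia.
          apply: all_catn => j; apply/allP => t /mapP [t' /mapP [m mg ->] ->] /=.
          have [h1 h2 h3] := p_weights hm hadm (pj_mono mg).
          move: h1 h2 h3; rewrite !sum_addU {2 4 6}/alp {2 4 6}/bep split_l.
          set a := (\sum_(k < n + n) m k * alp mexp k)%N.
          set b := (\sum_(k < n + n) m k * bep mexp k)%N.
          move=> h1 h2 h3; apply/andP; split; lia.
        rewrite all_cat hL all_map /=; apply/allP => t /(allP hL) /andP [h1 h2] /=.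
        by rewrite /cj /= h1 h2.
      move=> u uu; have h := hRe (xz u) (bd 0 (rot u) hadm).
      rewrite Ez conjD conjM conjX conj_sum in h.
      have -> : \sum_(t <- L ++ map (@cj R) L) tval u t =
          \sum_(t <- L) tval u t + \sum_(t <- L) ((tval u t)^*)%C.
        rewrite big_cat; congr (_ + _); rewrite big_map.
        by apply: eq_bigr => t _; rewrite tval_cj.
      move: (\sum_(t <- L) tval u t) (\sum_(t <- L) ((tval u t)^*)%C) h => S1 S2 h.
      exact: ring2.
    move: hsep; rewrite /A => /eqP; rewrite mulf_eq0 oppr_eq0 mulf_eq0 invr_eq0 pnatr_eq0 orbF.
    by case/orP => [|/eqP //]; rewrite eq_complex /= oner_eq0 andbF.
  have f0 : f = 0.
    apply: mpoly_vanish => x; rewrite -(f0pt (zpart x)).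
    by apply: indep0 => [m /hf []//|j]; rewrite ptl.
  have c0E : c0 = ((complex.Re c0)%:C)%C.
    exact: realJ c0J.
  exists (complex.Re c0), (fun j => q (lift ord0 j) -
    ((complex.Re c0)%:C%C * ratr (delta mexp (lift ord0 j))) *: 'X_(lift ord0 j)).
  split; last split.
  - move=> j m; rewrite mcoeff_msupp mcoeffB mcoeffZ mcoeffX.
    case: (eqVneq U_(lift ord0 j)%MM m) => [<-|ne].
      by move=> _; rewrite mnm1E.
    by rewrite mulr0 subr0 -mcoeff_msupp => /hq [].
  - by rewrite qE f0 addr0 -c0E.
  - by move=> j; rewrite addrC subrK.
Qed.
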